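(* Assume Assumptions 1, 2, 3 (stated in the context). For any fixed $\epsilon_5>0$, if Line-Search (Algorithm 3, described in the context), called with input point $\theta$, makes infinitely many calls to subdivision, then either $\hat{\mathcal{P}}(\epsilon_5)$ (evaluated at $\theta$) is unbounded or $\theta$ is unsafe.
   Context: Problem: for $\theta$ and $t\in[0,T]$, body $i$ occupies $b_i(t,\theta)\subset\mathbb{R}^3$, obstacles occupy $o$; $\text{dist}$ is the shortest Euclidean distance between sets; $d_0\ge0$; $\mathcal{O}(\theta)$ twice differentiable cost. Assumption 1: finite decompositions $b_i=\bigcup_j b_{ij}$, $o=\bigcup_k o_k$ with each $(t,\theta)\mapsto\text{dist}(b_{ij}(t,\theta),o_k)$ sufficiently smooth. Assumption 2: the feasible domain of $t,\theta$ is bounded. Assumption 3: $\mathcal{P}$ sufficiently smooth, monotonically decreasing on $(0,\infty)$, $\lim_{x\to0}\mathcal{P}=\infty$, $\lim_{x\to\infty}\mathcal{P}=0$, $\lim_{x\to0}x\mathcal{P}(x)=\infty$. $L_1$: a constant with $|\text{dist}(b_{ij}(t_1,\theta),o_k)-\text{dist}(b_{ij}(t_2,\theta),o_k)|\le L_1|t_1-t_2|$ for all arguments. $\mathcal{P}_{ijk}(t,\theta)=\mathcal{P}(\text{dist}(b_{ij}(t,\theta),o_k)-d_0)$; per triple a finite partition of $[0,T]$ into intervals $[T_0^l,T_1^l]$; subdividing $(i,j,k,l)$ replaces the interval by its two halves; $\mathcal{P}_{ijkl}(\theta)=\mathcal{P}_{ijk}((T_0^l+T_1^l)/2,\theta)$;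 $\mathcal{E}=\mathcal{O}+\mu\sum_{ijkl}(T_1^l-T_0^l)\mathcal{P}_{ijkl}$, $\mu>0$. The hybrid penalty $\hat{\mathcal{P}}(\epsilon_5)$ is $\sum_{ijkl}$ of $(T_1^l-T_0^l)\mathcal{P}_{ijkl}$ over intervals with $T_1^l-T_0^l\ge\epsilon_5$ and of $\int_{T_0^l}^{T_1^l}\mathcal{P}_{ijk}(t,\theta)dt$ over intervals with $T_1^l-T_0^l<\epsilon_5$. Directions $d^{(1)}=-\nabla_\theta\mathcal{E}$ or $d^{(2)}=\mathcal{M}(\nabla^2_\theta\mathcal{E})^{-1}d^{(1)}$ with $\underline\beta I\preceq\mathcal{M}(H)\preceq\bar\beta I$. Wolfe: $\mathcal{E}(\theta+d\alpha)\le\mathcal{E}(\theta)+c\langle d\alpha,\nabla\mathcal{E}\rangle$, $c\in(0,1)$. Safety check at $\theta$: $\psi(x)=L_1x/2+L_2x^\eta$ ($L_2,\eta>0$); return a tuple $(i,j,k,l)$ with $\text{dist}(b_{ij}((T_0^l+T_1^l)/2,\theta),o_k)\le d_0+\psi(T_1^l-T_0^l)$ if one exists, else None ($\theta$ safe; otherwise unsafe). Line-Search$(\theta,d,\epsilon_\alpha)$ ($\alpha_0>0,\gamma\in(0,1)$): $\alpha=\alpha_0$; while $\theta+d\alpha$ fails the safety check or Wolfe: if the check returned $(i,j,k,l)$, then if $\alpha\le\epsilon_\alpha$: $\epsilon_\alpha\leftarrow\gamma\epsilon_\alpha$, subdivide $(i,j,k,l)$, re-evaluate $\mathcal{E}$,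 recompute $d$; else $\alpha\leftarrow\gamma\alpha$; if only Wolfe fails, $\alpha\leftarrow\gamma\alpha$. Return $\alpha,\epsilon_\alpha$. *)

(* Defs.v *)
From HB Require Import structures.
From mathcomp Require Import all_boot all_order all_algebra.
From mathcomp Require Import all_classical all_reals all_analysis.
Set Implicit Arguments. Unset Strict Implicit. Unset Printing Implicit Defensive.
Import Order.TTheory GRing.Theory Num.Theory.
Import numFieldNormedType.Exports.
Local Open Scope classical_set_scope.
Local Open Scope ring_scope.

Section Defs.
Variable R : realType.

Definition norm2 {m : nat} (x : 'rV[R]_m) : R := Num.sqrt (\sum_i x 0 i ^+ 2).

Definition setdist (A B : set 'rV[R]_3) : R :=
  inf [set norm2 (x - y) | x in A & y in B].

Definition twice_diff {V : normedModType R} (f : V -> R) : Prop :=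
  (forall x, differentiable f x) /\ (forall v x, differentiable ('D_v f) x).

Definition is_partition (T : R) (s : seq (R * R)) : Prop :=
  [/\ s != [::], (head (0, 0) s).1 = 0, (last (0, 0) s).2 = T,
      all (fun I => I.1 < I.2) s &
      forall l, (l.+1 < size s)%N -> (nth (0, 0) s l).2 = (nth (0, 0) s l.+1).1].

Definition mid (I : R * R) : R := (I.1 + I.2) / 2.
Definition len (I : R * R) : R := I.2 - I.1.

Definition evec {n : nat} (i : 'I_n) : 'rV[R]_n := delta_mx 0 i.

Definition grad {n : nat} (f : 'rV[R]_n -> R) (th : 'rV[R]_n) : 'rV[R]_n :=
  \row_i ('D_(evec i) f th).

Definition hessian {n : nat} (f : 'rV[R]_n -> R) (th : 'rV[R]_n) : 'M[R]_n :=
  \matrix_(i, j) ('D_(evec j) ('D_(evec i) f) th).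

Definition inner {n : nat} (u v : 'rV[R]_n) : R := \sum_i u 0 i * v 0 i.

Definition qform {n : nat} (A : 'M[R]_n) (v : 'rV[R]_n) : R := (v *m A *m v^T) 0 0.

Section Problem.
Variables (n : nat) (Pc Ob : finType).
(** b p t th : the piece b_ij (p = (i,j)) at time t, parameters th;
    o q : the obstacle piece o_k (q = k). *)
Variable b : Pc -> R -> 'rV[R]_n -> set 'rV[R]_3.
Variable o : Ob -> set 'rV[R]_3.

Definition Dist (p : Pc) (q : Ob) (t : R) (th : 'rV[R]_n) : R :=
  setdist (b p t th) (o q).

(** the current interval partitions, one per pair (piece, obstacle piece);
    the index l of an interval is its position in the list *)
Definition ipartition := Pc -> Ob -> seq (R * R).

Variables (d0 : R) (P : R -> R) (O : 'rV[R]_n -> R) (mu : R).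

Definition Pe (x : R) : \bar R := if 0 < x then (P x)%:E else +oo%E.

Definition Eobj (pi : ipartition) (th : 'rV[R]_n) : R :=
  O th + mu * \sum_p \sum_q \sum_(I <- pi p q)
                  len I * P (Dist p q (mid I) th - d0).

Definition hatP (eps5 : R) (pi : ipartition) (th : 'rV[R]_n) : \bar R :=
  (\sum_p \sum_q \sum_(I <- pi p q)
     (if (eps5 <= len I)%R then (len I)%:E * Pe (Dist p q (mid I) th - d0)
      else \int[@lebesgue_measure R]_(t in `[I.1, I.2]) Pe (Dist p q t th - d0)))%E.

Variables (L1 L2 eta : R).
Definition psi (x : R) : R := L1 * x / 2 + L2 * x `^ eta.

(** tau = (p, q, l) is a tuple the safety check may return *)
Definition unsafe_tuple (pi : ipartition) (th : 'rV[R]_n) (tau : Pc * Ob * nat) : Prop :=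
  let: (p, q, l) := tau in
  (l < size (pi p q))%N /\
  Dist p q (mid (nth (0, 0) (pi p q) l)) th <= d0 + psi (len (nth (0, 0) (pi p q) l)).

(** safety check returns None *)
Definition safe (pi : ipartition) (th : 'rV[R]_n) : Prop :=
  forall tau, ~ unsafe_tuple pi th tau.

Definition subdivide (pi : ipartition) (tau : Pc * Ob * nat) : ipartition :=
  let: (p, q, l) := tau in
  fun p' q' =>
    if (p' == p) && (q' == q) then
      let s := pi p q in let I := nth (0, 0) s l in
      take l s ++ [:: (I.1, mid I); (mid I, I.2)] ++ drop l.+1 s
    else pi p' q'.

(** search direction: d1 = - grad E, or d2 = M(hess E)^{-1} d1 (column
    convention, written with row vectors) *)
Definition direction (newton : bool) (M : 'M[R]_n -> 'M[R]_n)
    (pi : ipartition) (th : 'rV[R]_n) : 'rV[R]_n :=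
  let d1 := - grad (Eobj pi) th in
  if newton then d1 *m (invmx (M (hessian (Eobj pi) th)))^T else d1.

Variable c : R.
Definition wolfe (pi : ipartition) (th d : 'rV[R]_n) (a : R) : Prop :=
  Eobj pi (th + a *: d) <= Eobj pi th + c * inner (a *: d) (grad (Eobj pi) th).

(** An infinite (non-terminating) execution of Line-Search(theta, d, eps_in)
    with initial ipartition pi0.  At iteration m the state is
    (part m, eps m, alpha m, d m); chk m is the output of the safety check at
    theta + (alpha m) d m (nondeterministic choice of the returned tuple). *)
Definition LS_run (newton : bool) (M : 'M[R]_n -> 'M[R]_n)
    (alpha0 gamma eps_in : R) (pi0 : ipartition) (theta : 'rV[R]_n)
    (part : nat -> ipartition) (eps alpha : nat -> R) (d : nat -> 'rV[R]_n)
    (chk : nat -> option (Pc * Ob * nat)) : Prop :=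
  [/\ part 0%N = pi0, eps 0%N = eps_in, alpha 0%N = alpha0,
      d 0%N = direction newton M pi0 theta &
      forall m : nat,
        let th' := theta + alpha m *: d m in
        [/\
            match chk m with
            | Some tau => unsafe_tuple (part m) th' tau
            | None => safe (part m) th'
            end,
            (* the while-condition holds: safety check or Wolfe fails *)
            chk m <> None \/ ~ wolfe (part m) theta (d m) (alpha m) &
            match chk m with
            | Some tau =>
                if alpha m <= eps m then
                  [/\ eps m.+1 = gamma * eps m,
                      part m.+1 = subdivide (part m) tau,
                      d m.+1 = direction newton M (part m.+1) theta &
                      alpha m.+1 = alpha m]
                else
                  [/\ eps m.+1 = eps m, part m.+1 = part m, d m.+1 = d m &
                      alpha m.+1 = gamma * alpha m]
            | None =>
                [/\ eps m.+1 = eps m, part m.+1 = part m, d m.+1 = d m &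
                    alpha m.+1 = gamma * alpha m]
            end]].

Definition subdivides_at (eps alpha : nat -> R) (chk : nat -> option (Pc * Ob * nat))
    (m : nat) : Prop :=
  (exists tau, chk m = Some tau) /\ alpha m <= eps m.

End Problem.
End Defs.

(* Main.v *)
Require Import Defs.
From HB Require Import structures.
From mathcomp Require Import all_boot all_order all_algebra.
From mathcomp Require Import all_classical all_reals all_analysis.
From mathcomp Require Import ring lra zify.
Import Order.TTheory GRing.Theory Num.Theory.
Import numFieldNormedType.Exports.
Local Open Scope classical_set_scope.
Local Open Scope ring_scope.
Set Implicit Arguments. Unset Strict Implicit. Unset Printing Implicit Defensive.

Section Disc.
Variables (R : realType) (Pc Ob : finType).

Lemma sum_subdiv (F : R * R -> R) (s : seq (R * R)) l : (l < size s)%N ->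
  \sum_(J <- take l s ++ [:: ((nth (0,0) s l).1, mid (nth (0,0) s l));
        (mid (nth (0,0) s l), (nth (0,0) s l).2)] ++ drop l.+1 s) F J
   = \sum_(J <- s) F J - F (nth (0,0) s l) + F ((nth (0,0) s l).1, mid (nth (0,0) s l))
     + F (mid (nth (0,0) s l), (nth (0,0) s l).2).
Proof.
move=> ls; set I := nth (0,0) s l.
have -> : \sum_(J <- s) F J = \sum_(J <- take l s ++ I :: drop l.+1 s) F J.
  by rewrite -drop_nth // cat_take_drop.
rewrite !big_cat !big_cons big_nil /=; ring.
Qed.

Lemma mem_subdiv (s : seq (R * R)) l J :
  J \in take l s ++ [:: ((nth (0,0) s l).1, mid (nth (0,0) s l));
        (mid (nth (0,0) s l), (nth (0,0) s l).2)] ++ drop l.+1 s ->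
  [\/ J \in s, J = ((nth (0,0) s l).1, mid (nth (0,0) s l)) |
      J = (mid (nth (0,0) s l), (nth (0,0) s l).2)].
Proof.
rewrite !mem_cat !inE => /orP[/mem_take ?|/orP[/orP[/eqP ?|/eqP ?]|/mem_drop ?]]; by [constructor 1|constructor 2|constructor 3].
Qed.

Definition invar (T : R) (pi : ipartition R Pc Ob) :=
  forall p q J, J \in pi p q -> [/\ 0 <= J.1, J.1 <= J.2 & J.2 <= T].

Definition absL (pi : ipartition R Pc Ob) p q := \sum_(J <- pi p q) `|len J|.

Definition Phi (pi : ipartition R Pc Ob) :=
  \sum_(x : Pc * Ob) \sum_(J <- pi x.1 x.2) len J ^+ 2.

Lemma invar_subdiv T pi p q l : (l < size (pi p q))%N -> invar T pi ->
  invar T (subdivide pi (p, q, l)).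
Proof.
move=> ls iv p' q' J; rewrite /subdivide.
case: ifP => [_|_]; last exact: iv.
have [h1 h2 h3] := iv p q _ (mem_nth (0,0) ls).
move=> /mem_subdiv [/iv //| -> | ->]; rewrite /mid /=; split; lra.
Qed.

Lemma absL_subdiv pi p q l p' q' : (l < size (pi p q))%N ->
  absL (subdivide pi (p, q, l)) p' q' = absL pi p' q'.
Proof.
move=> ls; rewrite /absL /subdivide.
case: ifP => [/andP[/eqP-> /eqP->]|_] //.
rewrite sum_subdiv // /len /mid /=.
set a := (nth _ _ _).1; set b := (nth _ _ _).2.
have -> : (a + b) / 2 - a = (b - a) / 2 by field.
have -> : b - (a + b) / 2 = (b - a) / 2 by field.
rewrite normrM [`|2^-1|]ger0_norm ?invr_ge0 ?ler0n //.
by field.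
Qed.

Lemma Phi_subdiv pi p q l : (l < size (pi p q))%N ->
  Phi (subdivide pi (p, q, l)) = Phi pi - len (nth (0,0) (pi p q) l) ^+ 2 / 2.
Proof.
move=> ls; rewrite /Phi (bigD1 (p, q)) //= [in RHS](bigD1 (p, q)) //=.
rewrite /subdivide !eqxx /= sum_subdiv //.
have -> : \sum_(i | i != (p, q)) \sum_(J <- (if (i.1 == p) && (i.2 == q) then
      take l (pi p q) ++ [:: ((nth (0, 0) (pi p q) l).1, mid (nth (0, 0) (pi p q) l));
      (mid (nth (0, 0) (pi p q) l), (nth (0, 0) (pi p q) l).2)] ++ drop l.+1 (pi p q)
      else pi i.1 i.2)) len J ^+ 2 = \sum_(i | i != (p, q)) \sum_(J <- pi i.1 i.2) len J ^+ 2.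
  apply: eq_bigr => -[p' q'] /= ne.
  by case: ifP => // /andP[/eqP e1 /eqP e2]; move: ne; rewrite e1 e2 eqxx.
rewrite /len /mid /=; set a := (nth _ _ _).1; set b := (nth _ _ _).2.
set S := \sum_(i | _) _; set S2 := \sum_(J <- pi p q) _; by field.
Qed.

End Disc.


Section Part.
Variables (R : realType).

Lemma part_lo T (s : seq (R * R)) : is_partition T s ->
  forall k, (k < size s)%N -> 0 <= (nth (0,0) s k).1.
Proof.
case=> _ h0 _ /(all_nthP (0,0)) hall hc; elim=> [|k ih] ks.
  by rewrite nth0 h0.
rewrite -hc //; have := hall k (ltnW ks); have := ih (ltnW ks) => /=; lra.
Qed.

Lemma part_hi T (s : seq (R * R)) : is_partition T s ->
  forall k, (k < size s)%N -> (nth (0,0) s k).2 <= T.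
Proof.
case=> _ _ hT /(all_nthP (0,0)) hall hc.
suff H : forall d k, (k < size s)%N -> (size s - k.+1 = d)%N -> (nth (0,0) s k).2 <= T.
  by move=> k ks; exact: (H _ k ks erefl).
elim=> [|d ih] k ks e.
  have -> : k = (size s).-1 by lia.
  by rewrite nth_last hT.
have k1s : (k.+1 < size s)%N by lia.
rewrite hc //; have := hall k.+1 k1s; have := ih k.+1 k1s ltac:(lia) => /=; lra.
Qed.

Lemma part_invar T (s : seq (R * R)) : is_partition T s ->
  forall J, J \in s -> [/\ 0 <= J.1, J.1 <= J.2 & J.2 <= T].
Proof.
move=> hp J /(nthP (0,0)) [k ks <-].
have := part_lo hp ks; have := part_hi hp ks.
case: hp => _ _ _ /(all_nthP (0,0)) hall _; have := hall k ks => /= *.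
split; lra.
Qed.

Lemma part_cover T (s : seq (R * R)) : is_partition T s ->
  forall t, 0 <= t <= T -> exists2 J, J \in s & J.1 <= t <= J.2.
Proof.
move=> hp t /andP[t0 tT]; have hp' := hp.
case: hp' => s0 h0 hT _ hc.
have sz : (0 < size s)%N by case: s s0 {h0 hT hc hp}.
have ex : exists k, ((k < size s)%N && (t <= (nth (0,0) s k).2)).
  exists (size s).-1; rewrite prednK // leqnn /=.
  by rewrite nth_last hT.
case: (ex_minnP ex) => k /andP[ks tk] hmin.
exists (nth (0,0) s k); first exact: mem_nth.
rewrite tk andbT; case: k ks tk hmin => [|k] ks tk hmin.
  by rewrite nth0 h0.
rewrite -hc //; have : ~~ ((k < size s)%N && (t <= (nth (0,0) s k).2)).
  by apply/negP => /hmin; rewrite ltnn.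
rewrite (ltnW ks) /= -ltNge => /ltW //.
Qed.

End Part.


Section Run.
Variables (R : realType) (n : nat) (Pc Ob : finType)
  (b : Pc -> R -> 'rV[R]_n -> set 'rV[R]_3) (o : Ob -> set 'rV[R]_3)
  (d0 : R) (P : R -> R) (O : 'rV[R]_n -> R) (mu : R)
  (L1 L2 eta : R) (alpha0 gamma c : R) (newton : bool) (M : 'M[R]_n -> 'M[R]_n)
  (pi0 : ipartition R Pc Ob) (theta : 'rV[R]_n) (eps_in : R)
  (part : nat -> ipartition R Pc Ob) (eps alpha : nat -> R)
  (d : nat -> 'rV[R]_n) (chk : nat -> option (Pc * Ob * nat)).

Hypothesis HLS : LS_run b o d0 P O mu L1 L2 eta c newton M alpha0 gamma eps_in pi0 theta
    part eps alpha d chk.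
Hypothesis Ha0 : 0 < alpha0.
Hypothesis Hg : 0 < gamma < 1.
Hypothesis Hinf : forall N, exists m, (N <= m)%N /\ subdivides_at eps alpha chk m.

Definition subd m := if chk m is Some _ then alpha m <= eps m else false.

Lemma subdE m : subdivides_at eps alpha chk m <-> subd m.
Proof.
rewrite /subdivides_at /subd; case: (chk m) => [tau|]; split.
- by case.
- by move=> h; split => //; exists tau.
- by case=> -[].
- by [].
Qed.

Lemma step m :
  [/\ match chk m with
      | Some tau => unsafe_tuple b o d0 L1 L2 eta (part m) (theta + alpha m *: d m) tau
      | None => True end &
      if subd m then
        exists tau, [/\ chk m = Some tau, eps m.+1 = gamma * eps m,
          part m.+1 = subdivide (part m) tau, d m.+1 = direction b o d0 P O mu newton M (part m.+1) theta &
          alpha m.+1 = alpha m]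
      else [/\ eps m.+1 = eps m, part m.+1 = part m, d m.+1 = d m &
          alpha m.+1 = gamma * alpha m \/ alpha m.+1 = alpha m]].
Proof.
case: HLS => _ _ _ _ /(_ m) [] /=; rewrite /subd.
case: (chk m) => [tau|] h1 _ h3.
  case: ifP h3 => _ [e1 e2 e3 e4]; split => //; first by exists tau.
  by split => //; left.
by case: h3 => e1 e2 e3 e4; split => //; split => //; left.
Qed.

Lemma alpha_pos m : 0 < alpha m.
Proof.
case: HLS => _ _ a0 _ _; elim: m => [|m ih]; first by rewrite a0.
have [_ ] := step m; case: ifP => _.
  by case=> tau [_ _ _ _ ->].
case=> _ _ _ [->|->] //; case/andP: Hg => g0 _; exact: mulr_gt0.
Qed.

Lemma alpha_dec m : alpha m.+1 <= alpha m.
Proof.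
have [_ ] := step m; case: ifP => _.
  by case=> tau [_ _ _ _ ->].
case=> _ _ _ [->|->] //; have := alpha_pos m; case/andP: Hg => g0 g1.
by move=> ap; rewrite ler_piMl // ltW.
Qed.

Lemma alpha_mono m k : (m <= k)%N -> alpha k <= alpha m.
Proof.
move=> /subnK <-; elim: (k - m)%N => [|j ih] //=.
by rewrite addSn; apply: le_trans (alpha_dec _) ih.
Qed.

Lemma eps_step m : eps m.+1 = if subd m then gamma * eps m else eps m.
Proof.
by have [_ ] := step m; case: ifP => _ [] // tau [].
Qed.

Lemma eps_in_pos : 0 < eps_in.
Proof.
case: HLS => _ e0 _ _ _.
have sgn : forall m, exists k, eps m = gamma ^+ k * eps_in.
  elim=> [|m [k ih]]; first by exists 0%N; rewrite e0 expr0 mul1r.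
  rewrite eps_step; case: ifP => _; last by exists k.
  by exists k.+1; rewrite ih exprS mulrA.
have [m [_ /subdE]] := Hinf 0%N; rewrite /subd; case: (chk m) => // _ ae.
have [k ek] := sgn m; have := lt_le_trans (alpha_pos m) ae; rewrite ek.
case/andP: Hg => g0 _; rewrite pmulr_rgt0 // exprn_gt0 //.
Qed.

Lemma eps_pos m : 0 < eps m.
Proof.
case: HLS => _ e0 _ _ _; elim: m => [|m ih]; first by rewrite e0 eps_in_pos.
rewrite eps_step; case: ifP => // _; case/andP: Hg => g0 _; exact: mulr_gt0.
Qed.

Lemma eps_dec m : eps m.+1 <= eps m.
Proof.
rewrite eps_step; case: ifP => // _; case/andP: Hg => g0 g1.
by rewrite ler_piMl ?ltW ?eps_pos.
Qed.

Lemma eps_mono m k : (m <= k)%N -> eps k <= eps m.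
Proof.
move=> /subnK <-; elim: (k - m)%N => [|j ih] //=.
by rewrite addSn; apply: le_trans (eps_dec _) ih.
Qed.

Lemma alpha_small (e : R) : 0 < e -> exists N, forall m, (N <= m)%N -> alpha m <= e.
Proof.
move=> e0.
have H : forall j, exists m, eps m <= gamma ^+ j * eps_in.
  case: HLS => _ e00 _ _ _.
  elim=> [|j [m ih]]; first by exists 0%N; rewrite e00 expr0 mul1r.
  have [m' [mm' /subdE sm']] := Hinf m.
  exists m'.+1; rewrite eps_step sm' exprS -mulrA.
  case/andP: Hg => g0 _; rewrite ler_pM2l //; exact: le_trans (eps_mono mm') ih.
have gcv := @cvg_expr R gamma.
have : `|gamma| < 1 by case/andP: Hg => g0 g1; rewrite gtr0_norm.
move/gcv/cvgrPdist_lt => /(_ (e / eps_in)).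
rewrite divr_gt0 ?eps_in_pos // => /(_ isT) [N _ HN].
have := HN N (leqnn N); rewrite /= sub0r normrN => hN.
have [m hm] := H N.
have [m' [mm' /subdE sm']] := Hinf m.
exists m' => k mk; apply: le_trans (alpha_mono mk) _.
move: sm'; rewrite /subd; case: (chk m') => // _ am.
apply: (le_trans am); apply: (le_trans (eps_mono mm')); apply: (le_trans hm).
rewrite -ler_pdivlMr ?eps_in_pos //; apply: ltW; apply: le_lt_trans hN.
exact: ler_norm.
Qed.


Definition lenAt m := if chk m is Some (p, q, l) then len (nth (0,0) (part m p q) l) else 0.

Lemma step_subd m : subd m -> exists p q l, [/\ chk m = Some (p, q, l),
   (l < size (part m p q))%N, part m.+1 = subdivide (part m) (p, q, l) &
   lenAt m = len (nth (0,0) (part m p q) l)].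
Proof.
move=> sm; have [h1] := step m; rewrite sm => -[[[p q] l] [e1 _ e3 _ _]].
move: h1; rewrite e1 => -[ls _]; exists p, q, l; split => //.
by rewrite /lenAt e1.
Qed.

Lemma part_step m : ~~ subd m -> part m.+1 = part m.
Proof. by move=> /negbTE sm; have [_] := step m; rewrite sm => -[]. Qed.

Lemma part_inv (T : R) : invar T pi0 -> forall m, [/\ invar T (part m) &
  forall p q, absL (part m) p q = absL pi0 p q].
Proof.
case: HLS => p0 _ _ _ _ iv0; elim=> [|m [ivm am]]; first by rewrite p0.
case sm: (subd m).
  have [p [q [l [_ ls -> _]]]] := step_subd sm.
  split; first exact: invar_subdiv.
  by move=> p' q'; rewrite absL_subdiv.
by rewrite part_step ?sm.
Qed.

Lemma Phi_ge0 (pi : ipartition R Pc Ob) : 0 <= Phi pi.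
Proof. by apply: sumr_ge0 => x _; apply: sumr_ge0 => J _; exact: sqr_ge0. Qed.

Lemma Phi_dec m : Phi (part m.+1) <= Phi (part m).
Proof.
case sm: (subd m); last by rewrite part_step ?sm.
have [p [q [l [_ ls -> _]]]] := step_subd sm.
rewrite Phi_subdiv // lerBlDr lerDl; apply: divr_ge0 => //; exact: sqr_ge0.
Qed.

Lemma Phi_mono m k : (m <= k)%N -> Phi (part k) <= Phi (part m).
Proof.
move=> /subnK <-; elim: (k - m)%N => [|j ih] //=.
by rewrite addSn; apply: le_trans (Phi_dec _) ih.
Qed.

Lemma Phi_subd m : subd m -> Phi (part m.+1) = Phi (part m) - lenAt m ^+ 2 / 2.
Proof.
move=> sm; have [p [q [l [_ ls -> ->]]]] := step_subd sm; exact: Phi_subdiv.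
Qed.

Lemma small_len (l0 : R) : 0 < l0 -> forall N, exists m, [/\ (N <= m)%N, subd m & `|lenAt m| < l0].
Proof.
move=> l00 N; apply: contrapT => hno.
have big : forall m, (N <= m)%N -> subd m -> l0 <= `|lenAt m|.
  move=> m Nm sm; rewrite leNgt; apply/negP => lt; apply: hno; by exists m.
have H : forall j, exists m, (N <= m)%N /\ Phi (part m) <= Phi (part N) - j%:R * (l0 ^+ 2 / 2).
  elim=> [|j [m [Nm ih]]]; first by exists N; rewrite mul0r subr0.
  have [m' [mm' /subdE sm']] := Hinf m.
  have Nm' := leq_trans Nm mm'.
  exists m'.+1; split; first exact: leqW.
  rewrite Phi_subd //; apply: (le_trans (lerB (Phi_mono mm') (lexx _))).
  have hl := big m' Nm' sm'.
  have : l0 ^+ 2 <= lenAt m' ^+ 2.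
    have e2 : lenAt m' ^+ 2 = `|lenAt m'| ^+ 2 by rewrite real_normK ?num_real.
    rewrite e2; have := normr_ge0 (lenAt m'); nra.
  move: ih; rewrite -[(j.+1)%:R]natr1 mulrDl mul1r.
  set X := l0 ^+ 2 / 2; set Y := j%:R * X; rewrite /X; lra.
have [j hj] : exists j : nat, Phi (part N) / (l0 ^+ 2 / 2) < j%:R.
  exists (Num.Def.archi_bound (Phi (part N) / (l0 ^+ 2 / 2))); apply: archi_boundP.
  by apply: divr_ge0; [exact: Phi_ge0| apply: divr_ge0 => //; exact: sqr_ge0].
have [m [_ hm]] := H j; have := Phi_ge0 (part m).
have l2 : 0 < l0 ^+ 2 / 2 by apply: divr_gt0 => //; exact: exprn_gt0.
move: hj; rewrite ltr_pdivrMr // => hj; lra.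
Qed.

Lemma d_struct m : exists k, d m = direction b o d0 P O mu newton M (part k) theta.
Proof.
case: HLS => p0 _ _ d00 _; elim: m => [|m [k ih]]; first by exists 0%N; rewrite d00 p0.
have [_] := step m; case: ifP => _.
  by case=> tau [_ _ _ -> _]; exists m.+1.
by case=> _ _ -> _; exists k.
Qed.

End Run.


Section Gen.
Variable R : realType.

Lemma lip_cont (f : R -> R) (K : R) :
  (forall x y, `|f x - f y| <= K * `|x - y|) -> continuous f.
Proof.
move=> H x; apply/cvgrPdist_le => e e0.
have K1 : 0 < `|K| + 1 by rewrite ltr_pwDr // normr_ge0.
apply/nbhs_ballP; exists (e / (`|K| + 1)); first by rewrite /= divr_gt0.
move=> y /= hy; move: hy; rewrite /ball /= => hy.
apply: (le_trans (H x y)); apply: (le_trans (ler_norm _)).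
rewrite normrM; have := normr_ge0 (x - y).
move: hy; rewrite ltr_pdivlMr // => hy hxy.
have : `|K| * `|x - y| <= `|x - y| * (`|K| + 1) by nra.
rewrite normr_id; lra.
Qed.

Lemma near_all_seq T (F : set_system T) (FF : Filter F) (A : eqType) (s : seq A)
  (Q : A -> T -> Prop) :
  (forall J, J \in s -> \forall x \near F, Q J x) ->
  \forall x \near F, forall J, J \in s -> Q J x.
Proof.
elim: s => [|a s ih] H; first by apply: nearW => x J.
have H1 := H a (mem_head a s).
have H2 := ih (fun J hJ => H J (@mem_behead _ (a :: s) J hJ)).
near=> x => J; rewrite in_cons => /orP[/eqP->|hJ]; [near: x; exact: H1| ].
by move: J hJ; near: x; exact: H2.
Unshelve. all: end_near.
Qed.

Lemma derive_bound n (f : 'rV[R]_n -> R) (a v : 'rV[R]_n) (C : R) : 0 <= C ->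
  (\forall h \near 0^', `|h^-1 *: ((f \o shift a) (h *: v) - f a)| <= C) ->
  `|'D_v f a| <= C.
Proof.
move=> C0 H; rewrite /derive.
set g := (fun h : R => h^-1 *: ((f \o shift a) (h *: v) - f a)).
have [cv|ncv] := pselect (cvg (g @ 0^')).
  rewrite ler_norml; apply/andP; split.
    apply: limr_ge => //; apply: filterS H => h; rewrite ler_norml => /andP[] //.
  apply: limr_le => //; apply: filterS H => h; rewrite ler_norml => /andP[] //.
have -> : lim (g @ 0^') = 0.
  rewrite /lim /lim_in getPN //= => l hl; apply: ncv; exact: cvgP hl.
by rewrite normr0.
Qed.

End Gen.

Section Gen2.
Variable R : realType.

Lemma P_lip (P : R -> R) (a bb : R) :
  (forall x, 0 < x -> derivable P x 1 /\ derivable ('D_1 P) x 1) ->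
  0 < a -> a <= bb ->
  exists Lp, 0 <= Lp /\ forall x y, a <= x <= bb -> a <= y <= bb ->
    `|P x - P y| <= Lp * `|x - y|.
Proof.
move=> HP a0 ab.
have gc : {within `[a, bb], continuous ('D_1 P)}.
  apply: derivable_within_continuous => x; rewrite in_itv /= => /andP[ax _].
  by have [] := HP x (lt_le_trans a0 ax).
have [c1 _ h1] := EVT_max ab gc.
have [c2 _ h2] := EVT_min ab gc.
exists (`|'D_1 P c1| + `|'D_1 P c2|); split; first by rewrite addr_ge0.
suff H : forall x y, a <= x <= bb -> a <= y <= bb -> x <= y ->
    `|P x - P y| <= (`|'D_1 P c1| + `|'D_1 P c2|) * `|x - y|.
  move=> x y hx hy; case/orP: (le_total x y) => xy; first exact: H.
  by rewrite distrC [`|x - y|]distrC; exact: (H y x hy hx xy).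
move=> x y /andP[ax xb] /andP[ay yb] xy.
have dP : forall z, z \in `]x, y[ -> is_derive z 1 P ('D_1 P z).
  move=> z; rewrite in_itv /= => /andP[xz _]; apply: derivableP.
  by have [] := HP z (lt_trans (lt_le_trans a0 ax) xz).
have cP : {within `[x, y], continuous P}.
  apply: derivable_within_continuous => z; rewrite in_itv /= => /andP[xz _].
  by have [] := HP z (lt_le_trans (lt_le_trans a0 ax) xz).
rewrite distrC; have [c cxy ->] := MVT_segment xy dP cP.
move: cxy; rewrite in_itv /= => /andP[xc cy].
have cab : c \in `[a, bb] by rewrite in_itv /= (le_trans ax xc) (le_trans cy yb).
have u1 := h1 _ cab; have u2 := h2 _ cab.
rewrite normrM [`|x - y|]distrC; apply: ler_wpM2r; first exact: normr_ge0.
rewrite ler_norml; apply/andP; split.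
  have := ler_norm (- 'D_1 P c2); rewrite normrN; have := normr_ge0 ('D_1 P c1); lra.
have := ler_norm ('D_1 P c1); have := normr_ge0 ('D_1 P c2); lra.
Qed.

Lemma pow_small (L2 eta e : R) : 0 < L2 -> 0 < eta -> 0 < e ->
  exists2 l, 0 < l & forall x, 0 <= x <= l -> L2 * x `^ eta <= e.
Proof.
move=> L20 et0 e0.
exists ((e / L2) `^ (eta^-1)); first by rewrite powR_gt0 // divr_gt0.
move=> x /andP[x0 xl].
have : x `^ eta <= ((e / L2) `^ (eta^-1)) `^ eta.
  by apply: ge0_ler_powR; rewrite ?nnegrE ?powR_ge0 ?(ltW et0).
rewrite -powRrM mulVf ?gt_eqF // powRr1; last by rewrite divr_ge0 // ltW.
by rewrite ler_pdivlMr // mulrC.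
Qed.

End Gen2.

Section Newton.
Variable R : realType.

Lemma sq_abs (x : R) : x ^+ 2 = `|x| ^+ 2.
Proof. by rewrite -normrX ger0_norm // sqr_ge0. Qed.

Definition ssq n (v : 'rV[R]_n) := \sum_i v 0 i ^+ 2.

Lemma ssq_ge0 n (v : 'rV[R]_n) : 0 <= ssq v.
Proof. by apply: sumr_ge0 => i _; exact: sqr_ge0. Qed.

Lemma norm2_ssq n (v : 'rV[R]_n) : norm2 v ^+ 2 = ssq v.
Proof. by rewrite /norm2 sqr_sqrtr // ssq_ge0. Qed.

Lemma coord_le_ssq n (v : 'rV[R]_n) i : v 0 i ^+ 2 <= ssq v.
Proof.
rewrite /ssq (bigD1 i) //= lerDl; apply: sumr_ge0 => j _; exact: sqr_ge0.
Qed.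

Lemma newton_bound n (A : 'M[R]_n) (beta C : R) (d1 : 'rV[R]_n) :
  0 < beta -> (forall v, beta * norm2 v ^+ 2 <= qform A v) ->
  (forall i, `|d1 0 i| <= C) ->
  forall i, `|(d1 *m (invmx A)^T) 0 i| <= 1 + n%:R * C ^+ 2 / beta ^+ 2.
Proof.
move=> b0 HA HC i.
have unitA : A \in unitmx.
  rewrite unitmxE unitfE; apply/negP => /det0P [v vn0 vA].
  have := HA v; rewrite /qform vA mul0mx mxE norm2_ssq => h.
  have s0 : ssq v = 0.
    by apply/eqP; rewrite eq_le ssq_ge0 andbT -(pmulr_rle0 _ b0).
  move/negP: vn0; apply; apply/eqP/rowP => j; rewrite mxE.
  have := coord_le_ssq v j; rewrite s0 => h2.
  by apply/eqP; rewrite -sqrf_eq0 eq_le h2 sqr_ge0.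
set w := d1 *m (invmx A)^T.
have wA : w *m A^T = d1 by rewrite /w -mulmxA -trmx_mul mulmxV // trmx1 mulmx1.
clearbody w.
have qw : qform A w = \sum_j d1 0 j * w 0 j.
  have -> : qform A w = ((w *m A *m w^T)^T) 0 0 by rewrite /qform [RHS]mxE.
  rewrite !trmx_mul trmxK mulmxA wA mxE; apply: eq_bigr => j _; by rewrite mxE.
have key : forall j, d1 0 j * w 0 j <= d1 0 j ^+ 2 / (2 * beta) + beta * w 0 j ^+ 2 / 2.
  move=> j; set x := d1 0 j; set y := w 0 j.
  have : 0 <= (x - beta * y) ^+ 2 / (2 * beta).
    by apply: divr_ge0; [exact: sqr_ge0| rewrite mulr_ge0 // ltW].
  have -> : (x - beta * y) ^+ 2 / (2 * beta) =
     x ^+ 2 / (2 * beta) + beta * y ^+ 2 / 2 - x * y.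
    by field; rewrite gt_eqF.
  lra.
have h1 := HA w; rewrite qw norm2_ssq in h1.
have h2 : \sum_j d1 0 j * w 0 j <= ssq d1 / (2 * beta) + beta * ssq w / 2.
  apply: (le_trans (ler_sum _ (fun j _ => key j))).
  by rewrite big_split /= -!mulr_suml -mulr_sumr.
have sw : ssq w <= ssq d1 / beta ^+ 2.
  have h3 : beta * ssq w / 2 <= ssq d1 / (2 * beta) by lra.
  have bn : beta != 0 by rewrite gt_eqF.
  have -> : ssq w = (beta * ssq w / 2) * (2 / beta) by field.
  have -> : ssq d1 / beta ^+ 2 = (ssq d1 / (2 * beta)) * (2 / beta) by field.
  by rewrite ler_pM2r // divr_gt0.
have sd : ssq d1 <= n%:R * C ^+ 2.
  rewrite mulr_natl -[X in _ *+ X](card_ord n) -sumr_const /ssq; apply: ler_sum => j _.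
  have := HC j; have := normr_ge0 (d1 0 j); rewrite [d1 0 j ^+ 2]sq_abs.
  move=> h0 hC; have C0 : 0 <= C := le_trans h0 hC.
  by rewrite lerXn2r ?nnegrE.
have wi := coord_le_ssq w i.
have : `|w 0 i| <= 1 + w 0 i ^+ 2.
  rewrite sq_abs; have := normr_ge0 (w 0 i); nra.
move=> h; apply: (le_trans h); rewrite lerD2l; apply: (le_trans wi); apply: (le_trans sw).
by rewrite ler_pM2r ?invr_gt0 ?exprn_gt0.
Qed.

End Newton.


Section Misc.
Variable R : realType.

Lemma near0' (r : R) : 0 < r -> \forall h \near (0:R)^', h != 0 /\ `|h| < r.
Proof.
move=> r0; rewrite /dnbhs /within; apply/nbhs_ballP; exists r => //= h.
by rewrite /ball /= sub0r normrN => hr hn; split.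
Qed.

Lemma fin_bound (I : finType) (f : I -> R) : exists M, 0 <= M /\ forall i, f i <= M.
Proof.
exists (\sum_i `|f i|); split; first by apply: sumr_ge0 => i _; exact: normr_ge0.
move=> i; apply: (le_trans (ler_norm _)); rewrite (bigD1 i) //= lerDl.
by apply: sumr_ge0 => j _; exact: normr_ge0.
Qed.

Lemma pair_shift n (h t : R) (th e : 'rV[R]_n) :
  h *: ((0:R), e) + (t, th) = (t, h *: e + th).
Proof.
have -> : h *: ((0:R), e) = (h *: 0, h *: e) by [].
have -> : ((h *: (0:R)), h *: e) + (t, th) = (h *: 0 + t, h *: e + th) by [].
by rewrite scaler0 add0r.
Qed.

Lemma rV_norm_le n (v : 'rV[R]_n) (C : R) : 0 <= C -> (forall i, `|v 0 i| <= C) -> `|v| <= C.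
Proof.
move=> C0 H; rewrite /Num.norm /= mx_normrE; apply: bigmax_le => // -[i j] _ /=.
by rewrite ord1.
Qed.

End Misc.

Section Prob.
Variables (R : realType) (n : nat) (Pc Ob : finType)
  (b : Pc -> R -> 'rV[R]_n -> set 'rV[R]_3) (o : Ob -> set 'rV[R]_3)
  (T d0 : R) (P : R -> R) (O : 'rV[R]_n -> R) (mu : R) (L1 : R) (theta : 'rV[R]_n).

Hypothesis HT : 0 < T.
Hypothesis HD : forall p q, twice_diff (fun z : R * 'rV[R]_n => Dist b o p q z.1 z.2).
Hypothesis HL : forall p q t1 t2 th,
      `|Dist b o p q t1 th - Dist b o p q t2 th| <= L1 * `|t1 - t2|.

Lemma L1_ge0 (p : Pc) (q : Ob) : 0 <= L1.
Proof.
have := HL p q 1 0 theta; rewrite subr0 normr1 mulr1; apply: le_trans; exact: normr_ge0.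
Qed.

Lemma Dist_cont p q th : continuous (fun t => Dist b o p q t th).
Proof. apply: (@lip_cont _ _ L1) => x y; exact: HL. Qed.

Lemma delta_ex : (forall p q t, 0 <= t <= T -> d0 < Dist b o p q t theta) ->
  exists2 dl, 0 < dl & forall p q t, 0 <= t <= T -> d0 + dl <= Dist b o p q t theta.
Proof.
move=> H.
have H1 : forall x : Pc * Ob, exists2 dl, 0 < dl & forall t, 0 <= t <= T ->
    d0 + dl <= Dist b o x.1 x.2 t theta.
  move=> [p q]; have T0 : 0 <= T by exact: ltW.
  have [c cT hc] := EVT_min T0 (continuous_subspaceT (@Dist_cont p q theta)).
  exists (Dist b o p q c theta - d0).
    by rewrite subr_gt0; apply: H; move: cT; rewrite in_itv.
  move=> t tT /=; rewrite addrC subrK; apply: hc; by rewrite in_itv.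
have : \forall dl \near (0:R)^'+, forall x : Pc * Ob, 0 < dl /\ forall t, 0 <= t <= T ->
    d0 + dl <= Dist b o x.1 x.2 t theta.
  apply: filter_forall => x; have [dx dx0 hx] := H1 x.
  near=> dl; split; first by near: dl; exact: nbhs_right_gt.
  move=> t tT; apply: le_trans (hx t tT); rewrite lerD2l.
  near: dl; exact: nbhs_right_le.
move=> /filter_ex [dl hdl].
have [p0|] := pselect (exists x : Pc * Ob, True).
  case: p0 => x _; have [dl0 _] := hdl x; exists dl => // p q t tT.
  by have [_ h] := hdl (p, q); exact: h.
move=> nx; exists 1 => // p q t; exfalso; apply: nx; by exists (p, q).
Unshelve. all: end_near.
Qed.


Lemma G_ex : exists G, 0 <= G /\ forall p q (i : 'I_n) t, 0 <= t <= T ->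
  \forall h \near (0:R)^', `|Dist b o p q t (h *: evec R i + theta) - Dist b o p q t theta|
     <= G * `|h|.
Proof.
have H1 : forall x : Pc * Ob * 'I_n, exists G, 0 <= G /\ forall t, 0 <= t <= T ->
  \forall h \near (0:R)^', `|Dist b o x.1.1 x.1.2 t (h *: evec R x.2 + theta)
     - Dist b o x.1.1 x.1.2 t theta| <= G * `|h|.
  move=> [[p q] i] /=.
  set Fj := (fun z : R * 'rV[R]_n => Dist b o p q z.1 z.2).
  set v := ((0:R), evec R i).
  set g := fun t => 'D_v Fj (t, theta).
  have gc : continuous g.
    move=> x; apply: (@continuous_comp R _ R (fun t => (t, theta)) ('D_v Fj) x).
      by apply: differentiable_continuous; apply: differentiable_pair.
    apply: differentiable_continuous; exact: (HD p q).2.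
  have T0 : 0 <= T by exact: ltW.
  have [c1 _ h1] := EVT_max T0 (continuous_subspaceT gc).
  have [c2 _ h2] := EVT_min T0 (continuous_subspaceT gc).
  exists (`|g c1| + `|g c2| + 1); split; first by rewrite !addr_ge0.
  move=> t tT.
  have tT' : t \in `[0, T] by rewrite in_itv.
  have gt : `|g t| <= `|g c1| + `|g c2|.
    have u1 := h1 t tT'; have u2 := h2 t tT'.
    rewrite ler_norml; apply/andP; split.
      have := ler_norm (- g c2); rewrite normrN; have := normr_ge0 (g c1); lra.
    have := ler_norm (g c1); have := normr_ge0 (g c2); lra.
  have dv : derivable Fj (t, theta) v by apply: diff_derivable; exact: (HD p q).1.
  have := (cvgrPdist_lt _ _).1 dv 1 ltr01.
  move=> hcv; near=> h.
  have [hn _] : h != 0 /\ `|h| < 1 by near: h; exact: near0'.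
  have hq : `|'D_v Fj (t, theta) - h^-1 *: ((Fj \o shift (t, theta)) (h *: v) - Fj (t, theta))| < 1.
    by near: h; exact: hcv.
  move: hq; rewrite /= pair_shift /Fj /= -/(g t) => hq.
  set D := Dist b o p q t (h *: evec R i + theta) - Dist b o p q t theta.
  have -> : D = h * (h^-1 * D) by rewrite mulrA mulfV ?mul1r.
  rewrite normrM mulrC; apply: ler_wpM2r; first exact: normr_ge0.
  have : `|h^-1 * D| <= `|g t| + 1.
    have := ler_distD (g t) 0 (h^-1 * D); rewrite !sub0r !normrN.
    have hq' : `|g t - h^-1 * D| < 1 by exact: hq.
    lra.
  lra.
have [Gf hG] := choice H1.
have [M [M0 hM]] := fin_bound Gf.
exists M; split => // p q i t tT.
have [G0 hG'] := hG (p, q, i); apply: filterS (hG' t tT) => h /= h1.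
apply: le_trans h1 _; apply: ler_wpM2r; [exact: normr_ge0| exact: hM].
Unshelve. all: end_near.
Qed.


Hypothesis HO : twice_diff O.
Hypothesis HP : forall x, 0 < x -> derivable P x 1 /\ derivable ('D_1 P) x 1.
Hypothesis Hmu : 0 < mu.

Lemma Dmax_ex : exists Dm, forall p q t, 0 <= t <= T -> Dist b o p q t theta <= Dm.
Proof.
have [M [_ hM]] := fin_bound (fun x : Pc * Ob => Dist b o x.1 x.2 0 theta + `|L1| * T).
exists M => p q t /andP[t0 tT]; apply: le_trans (hM (p, q)) => /=.
have := HL p q t 0 theta; rewrite subr0 (ger0_norm t0) => h.
have : L1 * t <= `|L1| * T.
  apply: (le_trans (ler_norm _)); rewrite normrM (ger0_norm t0).
  by apply: ler_wpM2l => //; exact: normr_ge0.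
have := ler_norm (Dist b o p q t theta - Dist b o p q 0 theta); lra.
Qed.

Lemma Eobj_bound (dl : R) : 0 < dl ->
  (forall p q t, 0 <= t <= T -> d0 + dl <= Dist b o p q t theta) ->
  exists C1 C2, [/\ 0 <= C1, 0 <= C2 & forall pi, invar T pi -> forall i : 'I_n,
    `|'D_(evec R i) (Eobj b o d0 P O mu pi) theta| <=
      C1 + C2 * \sum_p \sum_q absL pi p q].
Proof.
move=> dl0 Hdl.
have [Dm hDm] := Dmax_ex.
have a0 : 0 < dl / 2 by rewrite divr_gt0.
have ab : dl / 2 <= `|Dm - d0| + dl.
  have := normr_ge0 (Dm - d0); lra.
have [Lp [Lp0 hLp]] := P_lip HP a0 ab.
have [G [G0 hG]] := G_ex.
have [CO [CO0 hCO]] := fin_bound (fun i : 'I_n => `|'D_(evec R i) O theta| + 1).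
exists CO, (mu * Lp * G); split => //.
  by rewrite !mulr_ge0 // ltW.
move=> pi ivp i.
set S := \sum_p \sum_q absL pi p q.
have S0 : 0 <= S.
  by apply: sumr_ge0 => p _; apply: sumr_ge0 => q _; apply: sumr_ge0 => J _; exact: normr_ge0.
apply: derive_bound; first by rewrite addr_ge0 // !mulr_ge0 // ltW.
set e := evec R i.
have r0 : 0 < dl / (2 * (G + 1)) by rewrite divr_gt0 // mulr_gt0 // ltr_pwDr.
have dO : derivable O theta e by apply: diff_derivable; exact: HO.1.
have nO := (cvgrPdist_lt _ _).1 dO 1 ltr01.
have nJ : \forall h \near (0:R)^', forall p q J, J \in pi p q ->
    `|Dist b o p q (mid J) (h *: e + theta) - Dist b o p q (mid J) theta| <= G * `|h|.
  apply: filter_forall => p; apply: filter_forall => q.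
  apply: near_all_seq => J hJ; apply: hG.
  have [h1 h2 h3] := ivp p q J hJ; rewrite /mid; apply/andP; split; lra.
near=> h.
have [hn hr] : h != 0 /\ `|h| < dl / (2 * (G + 1)) by near: h; exact: near0'.
have hO : `|'D_e O theta - h^-1 *: ((O \o shift theta) (h *: e) - O theta)| < 1.
  by near: h; exact: nO.
have hJ : forall p q J, J \in pi p q ->
    `|Dist b o p q (mid J) (h *: e + theta) - Dist b o p q (mid J) theta| <= G * `|h|.
  by near: h; exact: nJ.
have Gh : G * `|h| <= dl / 2.
  move: hr; rewrite ltr_pdivlMr ?mulr_gt0 ?ltr_pwDr // => hr.
  have := normr_ge0 h; nra.
have hPJ : forall p q J, J \in pi p q ->
    `|P (Dist b o p q (mid J) (h *: e + theta) - d0) - P (Dist b o p q (mid J) theta - d0)|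
      <= Lp * (G * `|h|).
  move=> p q J jin; have := hJ p q J jin.
  have [h1 h2 h3] := ivp p q J jin.
  have mT : 0 <= mid J <= T by rewrite /mid; apply/andP; split; lra.
  have l1 := Hdl p q _ mT; have u1 := hDm p q _ mT.
  set x1 := Dist b o p q (mid J) (h *: e + theta); set x0 := Dist b o p q (mid J) theta.
  move=> hx; have := ler_norm (x1 - x0); have := ler_norm (- (x1 - x0)); rewrite normrN => n1 n2.
  have := ler_norm (Dm - d0) => n3.
  apply: (le_trans (hLp _ _ _ _)).
  - apply/andP; split; lra.
  - apply/andP; split; lra.
  apply: ler_wpM2l => //; have -> : x1 - d0 - (x0 - d0) = x1 - x0 by ring.
  exact: hx.
set Sf := fun th => \sum_p \sum_q \sum_(J <- pi p q) len J * P (Dist b o p q (mid J) th - d0).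
have hS : `|Sf (h *: e + theta) - Sf theta| <= Lp * (G * `|h|) * S.
  rewrite /Sf -sumrB; apply: (le_trans (ler_norm_sum _ _ _)); rewrite /S mulr_sumr.
  apply: ler_sum => p _; rewrite -sumrB; apply: (le_trans (ler_norm_sum _ _ _)).
  rewrite mulr_sumr; apply: ler_sum => q _.
  rewrite /absL -sumrB mulr_sumr; apply: (le_trans (ler_norm_sum _ _ _)).
  rewrite big_seq_cond [X in _ <= X]big_seq_cond; apply: ler_sum => J /andP[jin _].
  rewrite -mulrBr normrM mulrC; apply: ler_wpM2r; first exact: normr_ge0.
  exact: hPJ.
have -> : h^-1 *: ((Eobj b o d0 P O mu pi \o shift theta) (h *: e) - Eobj b o d0 P O mu pi theta)
   = h^-1 *: ((O \o shift theta) (h *: e) - O theta) + mu * (h^-1 * (Sf (h *: e + theta) - Sf theta)).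
  rewrite /= /Eobj /Sf /GRing.scale /=; ring.
apply: (le_trans (ler_normD _ _)); apply: lerD.
  have := hCO i; rewrite -/e; have := ler_distD ('D_e O theta) 0 (h^-1 *: ((O \o shift theta) (h *: e) - O theta)).
  rewrite !sub0r !normrN; lra.
rewrite normrM [`|mu|]gtr0_norm // -!mulrA; apply: ler_wpM2l; first exact: ltW.
rewrite normrM normrV ?unitfE //; apply: (le_trans (ler_wpM2l _ hS)); first by rewrite invr_ge0 normr_ge0.
have hn' : `|h| != 0 by rewrite normr_eq0.
have -> : `|h|^-1 * (Lp * (G * `|h|) * S) = Lp * (G * S) by field.
by [].
Unshelve. all: end_near.
Qed.


Lemma dir_bound (dl : R) (newton : bool) (M : 'M[R]_n -> 'M[R]_n) (beta_lo beta_hi Sb : R) :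
  0 < dl -> (forall p q t, 0 <= t <= T -> d0 + dl <= Dist b o p q t theta) ->
  0 < beta_lo ->
  (forall H v, beta_lo * norm2 v ^+ 2 <= qform (M H) v <= beta_hi * norm2 v ^+ 2) ->
  exists Dd, 0 <= Dd /\ forall pi, invar T pi -> \sum_p \sum_q absL pi p q <= Sb ->
    `|direction b o d0 P O mu newton M pi theta| <= Dd.
Proof.
move=> dl0 Hdl b0 HM.
have [C1 [C2 [C10 C20 HC]]] := Eobj_bound dl0 Hdl.
set C := C1 + C2 * `|Sb|.
have C0 : 0 <= C by rewrite addr_ge0 // mulr_ge0 // normr_ge0.
have q0 : 0 <= n%:R * C ^+ 2 / beta_lo ^+ 2.
  by rewrite !mulr_ge0 ?invr_ge0 ?exprn_ge0 ?ler0n // ltW.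
have Dd0 : 0 <= 1 + n%:R * C ^+ 2 / beta_lo ^+ 2 + C by apply: addr_ge0 => //; apply: addr_ge0.
exists (1 + n%:R * C ^+ 2 / beta_lo ^+ 2 + C); split => //.
move=> pi ivp hS; apply: rV_norm_le => //.
have hd1 : forall i, `|(- grad (Eobj b o d0 P O mu pi) theta) 0 i| <= C.
  move=> i; rewrite !mxE normrN; apply: (le_trans (HC pi ivp i)); rewrite lerD2l.
  apply: ler_wpM2l => //; exact: (le_trans hS (ler_norm _)).
move=> i; rewrite /direction; case: newton.
  apply: (le_trans (newton_bound b0 _ hd1 i)); first by move=> v; case/andP: (HM (hessian (Eobj b o d0 P O mu pi) theta) v).
  by rewrite lerDl.
apply: (le_trans (hd1 i)); rewrite lerDr; exact: addr_ge0.
Qed.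


Lemma Dist_cont_th p q t : {for theta, continuous (fun th => Dist b o p q t th)}.
Proof.
apply: (@continuous_comp _ _ _ (fun th => (t, th)) (fun z : R * 'rV[R]_n => Dist b o p q z.1 z.2) theta).
  by apply: differentiable_continuous; apply: differentiable_pair.
apply: differentiable_continuous; exact: (HD p q).1.
Qed.

Lemma unif_conv (th' : nat -> 'rV[R]_n) : th' m @[m --> \oo] --> theta ->
  forall eps, 0 < eps -> \forall m \near \oo, forall p q t, 0 <= t <= T ->
    `|Dist b o p q t (th' m) - Dist b o p q t theta| <= eps.
Proof.
move=> hth eps e0.
have x0 : 0 <= 4 * `|L1| * T / eps by rewrite !mulr_ge0 ?invr_ge0 ?normr_ge0 // ltW.
set K := Num.Def.archi_bound (4 * `|L1| * T / eps).
have hK := archi_boundP x0; rewrite -/K in hK.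
set N := K.+1.
have N0 : 0 < N%:R :> R by rewrite ltr0n.
set hg := T / N%:R.
have hg0 : 0 < hg by rewrite divr_gt0.
have hgs : 2 * (`|L1| * hg) <= eps / 2.
  rewrite /hg; have hKN : K%:R <= N%:R :> R by rewrite ler_nat.
  move: hK; rewrite ltr_pdivrMr // => hK.
  have : 4 * `|L1| * T <= N%:R * eps.
    apply: ltW; apply: (lt_le_trans hK); rewrite ler_pM2r //.
  move=> h4.
  have Nn : N%:R != 0 :> R by rewrite gt_eqF.
  have -> : 2 * (`|L1| * (T / N%:R)) = (4 * `|L1| * T) / N%:R / 2 by field.
  rewrite ler_pM2r ?invr_gt0 // ler_pdivrMr //; by rewrite [eps * _]mulrC.
have hc : forall x : Pc * Ob * 'I_N.+1, \forall m \near \oo,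
    `|Dist b o x.1.1 x.1.2 ((x.2)%:R * hg) (th' m) - Dist b o x.1.1 x.1.2 ((x.2)%:R * hg) theta| < eps / 2.
  move=> [[p q] j] /=.
  have cc := cvg_comp _ _ hth (@Dist_cont_th p q (j%:R * hg)).
  have := (cvgrPdist_lt _ _).1 cc (eps / 2) (divr_gt0 e0 (ltr0Sn R 1)).
  move=> H; apply: filterS (H _) => m /=; by rewrite distrC.
have hh := filter_forall _ hc.
near=> m => p q t /andP[t0 tT].
have hm : forall x : Pc * Ob * 'I_N.+1,
    `|Dist b o x.1.1 x.1.2 ((x.2)%:R * hg) (th' m) - Dist b o x.1.1 x.1.2 ((x.2)%:R * hg) theta| < eps / 2.
  by near: m; exact: hh.
have ex : exists j, (j <= N)%N && (t <= j%:R * hg).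
  exists N; rewrite leqnn /= /hg mulrC divfK ?gt_eqF //.
case: (ex_minnP ex) => j /andP[jN tj] hmin.
have hj : `|t - j%:R * hg| <= hg.
  case: j jN tj hmin => [|k] jN tj hmin.
    move: tj; rewrite mul0r subr0 => tj; have -> : t = 0 by apply/eqP; rewrite eq_le tj t0.
    by rewrite normr0 ltW.
  have : ~~ ((k <= N)%N && (t <= k%:R * hg)).
    by apply/negP => /hmin; rewrite ltnn.
  rewrite (leq_trans (leqnSn k) jN) /= -ltNge -natr1 mulrDl mul1r => tk.
  rewrite ler_norml; apply/andP; split; lra.
have jo : (j < N.+1)%N by rewrite ltnS.
have := hm (p, q, Ordinal jo) => /= h2.
have h1 := HL p q t (j%:R * hg) (th' m).
have h3 := HL p q (j%:R * hg) t theta.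
rewrite [`|j%:R * hg - t|]distrC in h3.
have l1 : L1 * `|t - j%:R * hg| <= `|L1| * hg.
  apply: (le_trans (ler_norm _)); rewrite normrM normr_id; apply: ler_wpM2l => //; exact: normr_ge0.
set A := Dist b o p q t (th' m); set B := Dist b o p q (j%:R * hg) (th' m).
set C' := Dist b o p q (j%:R * hg) theta; set D := Dist b o p q t theta.
have : `|A - D| <= `|A - B| + `|B - C'| + `|C' - D|.
  apply: (le_trans (ler_distD B A D)); rewrite -addrA lerD2l; exact: ler_distD.
lra.
Unshelve. all: end_near.
Qed.

End Prob.


Unset Implicit Arguments. Set Strict Implicit. Set Printing Implicit Defensive.

Theorem lemma7
  (R : realType) (n : nat) (Pc Ob : finType)
  (b : Pc -> R -> 'rV[R]_n -> set 'rV[R]_3) (o : Ob -> set 'rV[R]_3)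
  (T d0 : R) (P : R -> R) (O : 'rV[R]_n -> R) (mu : R)
  (L1 L2 eta : R) (Dom : set 'rV[R]_n)
  (alpha0 gamma c : R) (newton : bool) (M : 'M[R]_n -> 'M[R]_n)
  (beta_lo beta_hi : R)
  (pi0 : ipartition R Pc Ob) (theta : 'rV[R]_n) (eps_in eps5 : R)
  (part : nat -> ipartition R Pc Ob) (eps alpha : nat -> R)
  (d : nat -> 'rV[R]_n) (chk : nat -> option (Pc * Ob * nat)) :
  (* setting *)
  0 < T -> 0 <= d0 -> twice_diff O -> 0 < mu ->
  (* Assumption 1: (t, th) |-> dist(b_ij(t, th), o_k) sufficiently smooth *)
  (forall p q, twice_diff (fun z : R * 'rV[R]_n => Dist b o p q z.1 z.2)) ->
  (* Assumption 2: bounded feasible domain *)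
  bounded_set Dom -> Dom theta ->
  (* Assumption 3 *)
  (forall x, 0 < x -> derivable P x 1 /\ derivable ('D_1 P) x 1) ->
  (forall x y, 0 < x -> x <= y -> P y <= P x) ->
  P x @[x --> 0^'+] --> +oo ->
  P x @[x --> +oo] --> 0 ->
  (x * P x) @[x --> 0^'+] --> +oo ->
  (* Lipschitz constant in time *)
  (forall p q t1 t2 th,
      `|Dist b o p q t1 th - Dist b o p q t2 th| <= L1 * `|t1 - t2|) ->
  (* safety check parameters *)
  0 < L2 -> 0 < eta ->
  (* line-search parameters *)
  0 < alpha0 -> 0 < gamma < 1 -> 0 < c < 1 ->
  0 < beta_lo ->
  (forall H v, beta_lo * norm2 v ^+ 2 <= qform (M H) v <= beta_hi * norm2 v ^+ 2) ->
  (* initial partitions *)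
  (forall p q, is_partition T (pi0 p q)) ->
  (* an execution of Line-Search at theta ... *)
  LS_run b o d0 P O mu L1 L2 eta c newton M alpha0 gamma eps_in pi0 theta
    part eps alpha d chk ->
  (* ... making infinitely many calls to subdivision *)
  (forall N, exists m, (N <= m)%N /\ subdivides_at eps alpha chk m) ->
  0 < eps5 ->
  (forall K : R, exists m, (K%:E < hatP b o d0 P eps5 (part m) theta)%E)
  \/ (exists m, ~ safe b o d0 L1 L2 eta (part m) theta).
Proof.
move=> HT Hd0 HO Hmu HD _ _ HP _ _ _ _ HL HL2 Heta Ha0 Hg _ Hb HM Hpi HLS Hinf _.
right.
have p00 : part 0%N = pi0 by case: HLS.
have [[p [q [t [tT tle]]]]|Hgt] :=
  pselect (exists p q t, 0 <= t <= T /\ Dist b o p q t theta <= d0).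
  exists 0%N; rewrite p00 => hs.
  have [J Jin /andP[J1 J2]] := part_cover (Hpi p q) tT.
  apply: (hs (p, q, index J (pi0 p q))); split; first by rewrite index_mem.
  rewrite nth_index //.
  have L10 := L1_ge0 theta HL p q.
  have hm := HL p q (mid J) t theta.
  have hmt : `|mid J - t| <= len J / 2.
    rewrite /mid /len ler_norml; apply/andP; split; lra.
  have : L1 * `|mid J - t| <= L1 * (len J / 2) by exact: ler_wpM2l.
  have := ler_norm (Dist b o p q (mid J) theta - Dist b o p q t theta).
  have := @powR_ge0 R (len J) eta.
  rewrite /psi => pw n1 n2.
  have : 0 <= L2 * len J `^ eta by rewrite mulr_ge0 // ltW.
  move=> n3; rewrite -mulrA; lra.
exfalso.
have Hgt' : forall p q t, 0 <= t <= T -> d0 < Dist b o p q t theta.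
  move=> p q t tT; rewrite ltNge; apply/negP => hle; apply: Hgt; by exists p, q, t.
have [dl dl0 Hdl] := delta_ex HT HL Hgt'.
have iv0 : invar T pi0 by move=> p q J /(part_invar (Hpi p q)).
have Hinv := part_inv HLS iv0.
set Sb := \sum_p \sum_q absL pi0 p q.
have [Dd [Dd0 HDd]] := dir_bound HT HD HL HO HP Hmu newton Sb dl0 Hdl Hb HM.
have dB : forall m, `|d m| <= Dd.
  move=> m; have [k ->] := d_struct HLS m; apply: HDd; first by case: (Hinv k).
  rewrite /Sb; apply: ler_sum => p _; apply: ler_sum => q _.
  by case: (Hinv k) => _ ->.
set th' := fun m => theta + alpha m *: d m.
have cth : th' m @[m --> \oo] --> theta.
  apply/cvgrPdist_le => e e0.
  have [N HN] := alpha_small HLS Ha0 Hg Hinf (divr_gt0 e0 (ltr_pwDr ltr01 Dd0)).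
  exists N => // m /= Nm.
  rewrite /th' opprD addrA subrr sub0r normrN normrZ.
  have am := HN m Nm; have a0 := alpha_pos HLS Ha0 Hg m.
  rewrite (gtr0_norm a0); apply: (le_trans (ler_wpM2l (ltW a0) (dB m))).
  apply: (le_trans (ler_wpM2r Dd0 am)).
  rewrite mulrAC ler_pdivrMr ?ltr_pwDr //; apply: ler_wpM2l; [exact: ltW| lra].
have [N1 _ HN1] := unif_conv HT HD HL cth (divr_gt0 dl0 (ltr0Sn R 2)).
have L1a : 0 < 3 * (`|L1| + 1) by rewrite mulr_gt0 // ltr_pwDr // normr_ge0.
set la := dl / (3 * (`|L1| + 1)).
have la0 : 0 < la by rewrite divr_gt0.
have [lb lb0 Hlb] := pow_small HL2 Heta (divr_gt0 dl0 (ltr0Sn R 5)).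
have l00 : 0 < Num.min la lb by rewrite lt_min la0 lb0.
have [m [N1m sm hlen]] := small_len HLS Hinf l00 N1.
have [p [q [l [ec ls _ el]]]] := step_subd HLS sm.
have [hu _] := step HLS m; rewrite ec in hu; case: hu => _ hu.
set J := nth (0, 0) (part m p q) l in el hu.
have Jin : J \in part m p q by exact: mem_nth.
have [h1 h2 h3] := (Hinv m).1 p q J Jin.
have mT : 0 <= mid J <= T by rewrite /mid; apply/andP; split; lra.
have u1 := HN1 m N1m p q (mid J) mT.
have u2 := Hdl p q (mid J) mT.
move: hlen; rewrite el lt_min => /andP[hla hlb].
have len0 : 0 <= len J by rewrite /len; lra.
rewrite (ger0_norm len0) in hla hlb.
have ps2 : L2 * len J `^ eta <= dl / 6.
  apply: Hlb; rewrite len0 /=; exact: ltW.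
have ps1 : L1 * len J / 2 <= dl / 6.
  have : L1 * len J <= `|L1| * la.
    apply: (le_trans (ler_norm _)); rewrite normrM (ger0_norm len0).
    apply: ler_pM; [exact: normr_ge0 | exact: len0 | exact: lexx | exact: ltW hla].
  have : `|L1| * la <= dl / 3.
    have L1p : 0 < `|L1| + 1 by rewrite ltr_pwDr // normr_ge0.
    have hL : `|L1| / (`|L1| + 1) <= 1.
      by rewrite ler_pdivrMr // mul1r lerDl.
    have -> : `|L1| * la = dl / 3 * (`|L1| / (`|L1| + 1)).
      by rewrite /la; field; rewrite gt_eqF.
    rewrite -[X in _ <= X]mulr1; apply: ler_wpM2l => //.
    by rewrite divr_ge0 // ltW.
  lra.
move: hu; rewrite /psi -/(th' m) => hu.
have := ler_norm (Dist b o p q (mid J) (th' m) - Dist b o p q (mid J) theta).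
have := ler_norm (- (Dist b o p q (mid J) (th' m) - Dist b o p q (mid J) theta)).
rewrite normrN; lra.
Qed.
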